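(* Let $f:U\to\mathbb{L}^3$ be a minface with real Weierstrass data $(g_1,g_2,\hat\omega_1du,\hat\omega_2dv)$, and let $\gamma(t)=(\gamma_1(t),\gamma_2(t))$ be the singular curve passing through a cuspidal edge $p=\gamma(0)$ (so that $\gamma$ consists of cuspidal edges near $t=0$). Then the Gaussian curvature $K$ of $f$ (at regular points near $\gamma$) and the singular curvature $\kappa_s$ of $\gamma$ have the same sign. In particular, $\kappa_s(t)=0$ if and only if $g_1'(\gamma_1(t))=0$ or $g_2'(\gamma_2(t))=0$.
   Context: $\mathbb{L}^3$ is $\mathbb{R}^3$ with the Lorentzian metric $-(dx^0)^2+(dx^1)^2+(dx^2)^2$. $U\subset\mathbb{R}^2$ is a domain with coordinates $(u,v)$; $f:U\to\mathbb{L}^3$ is a minface with real Weierstrass data $(g_1,g_2,\hat\omega_1du,\hat\omega_2dv)$ if $g_1=g_1(u)$, $g_2=g_2(v)$ are smooth, $\hat\omega_1=\hat\omega_1(u)$, $\hat\omega_2=\hat\omega_2(v)$ are smooth and nowhere zero, $g_1g_2\neq1$ on an open dense set, and $f(u,v)=\frac12\int_{u_0}^u(-1-g_1^2,1-g_1^2,2g_1)\hat\omega_1du+\frac12\int_{v_0}^v(1+g_2^2,1-g_2^2,-2g_2)\hat\omega_2dv+f(u_0,v_0)$. Singular points (where $f$ is not an immersion) are exactly the points with $g_1g_2=1$; at regular points $f$ is a timelike immersion with zero mean curvature, with Gaussian curvature $K=\det S$ ($S$ the shape operator w.r.t. a spacelike unit normal). Identify $\mathbb{L}^3$ with Euclidean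 $\mathbb{R}^3$ with Euclidean inner product $\langle\,,\,\rangle_E$. Then $n=\big((1-g_1g_2)^2+2(g_1+g_2)^2\big)^{-1/2}(-g_1-g_2,\,g_1-g_2,\,-1-g_1g_2)$ is a Euclidean unit normal field of $f$; set $\lambda=\det(f_u,f_v,n)$. A singular point is a cuspidal edge if the germ of $f$ there is $\mathcal{A}$-equivalent (equal up to local diffeomorphisms of source and target) to the germ of $(u,v)\mapsto(u^2,u^3,v)$ at the origin. The singular curve is a regular curve $\gamma$ in $U$ parametrizing the singular set near $p$; a null vector field $\eta(t)$ is a nonzero vector field along $\gamma$ with $\eta(t)\in\ker df_{\gamma(t)}$, chosen so that $(\gamma'(t),\eta(t))$ is positively oriented. The singular curvature is $\kappa_s(t)=\mathrm{sgn}(d\lambda(\eta(t)))\,\dfrac{\det(\hat\gamma'(t),\hat\gamma''(t),n(\gamma(t)))}{|\hat\gamma'(t)|^3}$, where $\hat\gamma=f\circ\gamma$ and $|\cdot|$ is the Euclidean norm. *)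

(* Defs.v *)
From Stdlib Require Import Reals List.
From Coquelicot Require Import Coquelicot.
Open Scope R_scope.

Definition pt2 := (R * R)%type.
Definition pt3 := (R * R * R)%type.
Definition mk3 (x y z : R) : pt3 := (x, y, z).
Definition c0 (a : pt3) : R := fst (fst a).
Definition c1 (a : pt3) : R := snd (fst a).
Definition c2 (a : pt3) : R := snd a.

Definition scal3 (k : R) (a : pt3) : pt3 := mk3 (k * c0 a) (k * c1 a) (k * c2 a).
Definition add3 (a b : pt3) : pt3 := mk3 (c0 a + c0 b) (c1 a + c1 b) (c2 a + c2 b).
Definition dotE (a b : pt3) : R := c0 a * c0 b + c1 a * c1 b + c2 a * c2 b.
Definition normE (a : pt3) : R := sqrt (dotE a a).
Definition cross (a b : pt3) : pt3 :=
  mk3 (c1 a * c2 b - c2 a * c1 b) (c2 a * c0 b - c0 a * c2 b) (c0 a * c1 b - c1 a * c0 b).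
Definition det3 (a b c : pt3) : R := dotE (cross a b) c.
Definition dotL (a b : pt3) : R := - c0 a * c0 b + c1 a * c1 b + c2 a * c2 b.

Definition det2 (a b : pt2) : R := fst a * snd b - snd a * fst b.
Definition dist2 (p q : pt2) : R := sqrt ((fst p - fst q) ^ 2 + (snd p - snd q) ^ 2).

Definition sgn (x : R) : R :=
  match Rlt_dec 0 x with left _ => 1 | right _ =>
    match Rlt_dec x 0 with left _ => -1 | right _ => 0 end end.

Definition connected2 (U : pt2 -> Prop) : Prop :=
  forall A B : pt2 -> Prop, open A -> open B ->
    (forall q, U q -> A q \/ B q) -> (forall q, U q -> A q -> B q -> False) ->
    (forall q, U q -> A q) \/ (forall q, U q -> B q).
Definition domain2 (U : pt2 -> Prop) : Prop :=
  open U /\ connected2 U /\ exists q, U q.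

Definition smooth_on (O : R -> Prop) (g : R -> R) : Prop :=
  forall (n : nat) (x : R), O x -> ex_derive_n g n x.

Definition upd2 (p : pt2) (i : nat) (t : R) : pt2 :=
  match i with O => (t, snd p) | _ => (fst p, t) end.
Definition crd2 (p : pt2) (i : nat) : R := match i with O => fst p | _ => snd p end.
Definition pd2 (i : nat) (h : pt2 -> R) (p : pt2) : R :=
  Derive (fun t => h (upd2 p i t)) (crd2 p i).
Definition ipd2 (l : list nat) (h : pt2 -> R) : pt2 -> R := fold_right pd2 h l.
Definition smooth2 (O : pt2 -> Prop) (h : pt2 -> R) : Prop :=
  forall (l : list nat) (p : pt2), O p ->
    continuous (ipd2 l h) p /\
    forall i, (i < 2)%nat -> ex_derive (fun t => ipd2 l h (upd2 p i t)) (crd2 p i).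

Definition upd3 (p : pt3) (i : nat) (t : R) : pt3 :=
  match i with O => mk3 t (c1 p) (c2 p) | 1%nat => mk3 (c0 p) t (c2 p) | _ => mk3 (c0 p) (c1 p) t end.
Definition crd3 (p : pt3) (i : nat) : R :=
  match i with O => c0 p | 1%nat => c1 p | _ => c2 p end.
Definition pd3 (i : nat) (h : pt3 -> R) (p : pt3) : R :=
  Derive (fun t => h (upd3 p i t)) (crd3 p i).
Definition ipd3 (l : list nat) (h : pt3 -> R) : pt3 -> R := fold_right pd3 h l.
Definition smooth3 (O : pt3 -> Prop) (h : pt3 -> R) : Prop :=
  forall (l : list nat) (p : pt3), O p ->
    continuous (ipd3 l h) p /\
    forall i, (i < 3)%nat -> ex_derive (fun t => ipd3 l h (upd3 p i t)) (crd3 p i).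

Definition smooth2map (O : pt2 -> Prop) (phi : pt2 -> pt2) : Prop :=
  smooth2 O (fun p => fst (phi p)) /\ smooth2 O (fun p => snd (phi p)).
Definition smooth3map (O : pt3 -> Prop) (Phi : pt3 -> pt3) : Prop :=
  smooth3 O (fun p => c0 (Phi p)) /\ smooth3 O (fun p => c1 (Phi p)) /\
  smooth3 O (fun p => c2 (Phi p)).

Definition diffeo2 (A B : pt2 -> Prop) (phi : pt2 -> pt2) : Prop :=
  open A /\ open B /\ exists psi : pt2 -> pt2,
    smooth2map A phi /\ smooth2map B psi /\
    (forall p, A p -> B (phi p) /\ psi (phi p) = p) /\
    (forall q, B q -> A (psi q) /\ phi (psi q) = q).
Definition diffeo3 (A B : pt3 -> Prop) (Phi : pt3 -> pt3) : Prop :=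
  open A /\ open B /\ exists Psi : pt3 -> pt3,
    smooth3map A Phi /\ smooth3map B Psi /\
    (forall p, A p -> B (Phi p) /\ Psi (Phi p) = p) /\
    (forall q, B q -> A (Psi q) /\ Phi (Psi q) = q).

Definition proj1U (U : pt2 -> Prop) (u : R) : Prop := exists v, U (u, v).
Definition proj2U (U : pt2 -> Prop) (v : R) : Prop := exists u, U (u, v).

Definition real_weierstrass_data (U : pt2 -> Prop) (g1 g2 w1 w2 : R -> R) : Prop :=
  domain2 U /\
  smooth_on (proj1U U) g1 /\ smooth_on (proj1U U) w1 /\
  smooth_on (proj2U U) g2 /\ smooth_on (proj2U U) w2 /\
  (forall u, proj1U U u -> w1 u <> 0) /\ (forall v, proj2U U v -> w2 v <> 0) /\
  (* g1 g2 <> 1 on an open dense subset of U (the set is automatically open) *)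
  (forall q, U q -> forall r, 0 < r ->
     exists q', U q' /\ dist2 q q' < r /\ g1 (fst q') * g2 (snd q') <> 1).

(* f(u,v) = 1/2 int_{u0}^u (-1-g1^2,1-g1^2,2g1) w1 du
          + 1/2 int_{v0}^v (1+g2^2,1-g2^2,-2g2) w2 dv + f(u0,v0),  c = f(u0,v0) *)
Definition minface (g1 g2 w1 w2 : R -> R) (u0 v0 : R) (c : pt3) (q : pt2) : pt3 :=
  let u := fst q in let v := snd q in
  mk3 (c0 c + / 2 * RInt (fun s => (-1 - g1 s ^ 2) * w1 s) u0 u
            + / 2 * RInt (fun s => (1 + g2 s ^ 2) * w2 s) v0 v)
      (c1 c + / 2 * RInt (fun s => (1 - g1 s ^ 2) * w1 s) u0 u
            + / 2 * RInt (fun s => (1 - g2 s ^ 2) * w2 s) v0 v)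
      (c2 c + / 2 * RInt (fun s => 2 * g1 s * w1 s) u0 u
            + / 2 * RInt (fun s => -2 * g2 s * w2 s) v0 v).

Definition dF (l : list nat) (F : pt2 -> pt3) (q : pt2) : pt3 :=
  mk3 (ipd2 l (fun p => c0 (F p)) q) (ipd2 l (fun p => c1 (F p)) q)
      (ipd2 l (fun p => c2 (F p)) q).
Definition fu F q := dF (0%nat :: nil) F q.
Definition fv F q := dF (1%nat :: nil) F q.
Definition fuu F q := dF (0%nat :: 0%nat :: nil) F q.
Definition fuv F q := dF (0%nat :: 1%nat :: nil) F q.
Definition fvv F q := dF (1%nat :: 1%nat :: nil) F q.

Definition singular (F : pt2 -> pt3) (q : pt2) : Prop :=
  cross (fu F q) (fv F q) = mk3 0 0 0.

(* Lorentzian unit (spacelike) normal: N satisfies <N,x>_L = det(f_u,f_v,x) *)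
Definition lnormal (F : pt2 -> pt3) (q : pt2) : pt3 :=
  let c := cross (fu F q) (fv F q) in
  let N := mk3 (- c0 c) (c1 c) (c2 c) in
  scal3 (/ sqrt (dotL N N)) N.

(* Gaussian curvature K = det S, S = I^{-1} II the shape operator *)
Definition gauss (F : pt2 -> pt3) (q : pt2) : R :=
  let E := dotL (fu F q) (fu F q) in
  let Fm := dotL (fu F q) (fv F q) in
  let G := dotL (fv F q) (fv F q) in
  let nu := lnormal F q in
  let L := dotL (fuu F q) nu in
  let M := dotL (fuv F q) nu in
  let N := dotL (fvv F q) nu in
  let D := E * G - Fm * Fm in
  let S11 := (G * L - Fm * M) / D in
  let S12 := (G * M - Fm * N) / D in
  let S21 := (- Fm * L + E * M) / D in
  let S22 := (- Fm * M + E * N) / D in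
  S11 * S22 - S12 * S21.

Definition euc_normal (g1 g2 : R -> R) (q : pt2) : pt3 :=
  let a := g1 (fst q) in let b := g2 (snd q) in
  scal3 (/ sqrt ((1 - a * b) ^ 2 + 2 * (a + b) ^ 2)) (mk3 (- a - b) (a - b) (- 1 - a * b)).

Definition lam (F : pt2 -> pt3) (g1 g2 : R -> R) (q : pt2) : R :=
  det3 (fu F q) (fv F q) (euc_normal g1 g2 q).

Definition cusp (q : pt2) : pt3 := mk3 (fst q ^ 2) (fst q ^ 3) (snd q).

(* the germ of F at p is A-equivalent to the germ of the cusp map at 0 *)
Definition cuspidal_edge (U : pt2 -> Prop) (F : pt2 -> pt3) (p : pt2) : Prop :=
  exists (W V : pt2 -> Prop) (phi : pt2 -> pt2) (O Q : pt3 -> Prop) (Psi : pt3 -> pt3),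
    W (0, 0) /\ V p /\ (forall q, V q -> U q) /\ diffeo2 W V phi /\ phi (0, 0) = p /\
    O (mk3 0 0 0) /\ diffeo3 O Q Psi /\ Psi (mk3 0 0 0) = F p /\
    forall q, W q -> O (cusp q) /\ F (phi q) = Psi (cusp q).

Definition dcurve (gam : R -> pt2) (t : R) : pt2 :=
  (Derive (fun s => fst (gam s)) t, Derive (fun s => snd (gam s)) t).

Definition singular_curve (U : pt2 -> Prop) (F : pt2 -> pt3) (gam : R -> pt2) (a b : R) : Prop :=
  a < 0 < b /\
  smooth_on (fun t => a < t < b) (fun t => fst (gam t)) /\
  smooth_on (fun t => a < t < b) (fun t => snd (gam t)) /\
  (forall t, a < t < b -> U (gam t) /\ dcurve gam t <> (0, 0) /\ singular F (gam t)) /\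
  exists V : pt2 -> Prop, open V /\ V (gam 0) /\ (forall q, V q -> U q) /\
    forall q, V q -> (singular F q <-> exists t, a < t < b /\ gam t = q).

Definition null_vector_field (F : pt2 -> pt3) (gam eta : R -> pt2) (a b : R) : Prop :=
  forall t, a < t < b ->
    eta t <> (0, 0) /\
    add3 (scal3 (fst (eta t)) (fu F (gam t))) (scal3 (snd (eta t)) (fv F (gam t))) = mk3 0 0 0 /\
    0 < det2 (dcurve gam t) (eta t).

Definition sing_curv (F : pt2 -> pt3) (g1 g2 : R -> R) (gam eta : R -> pt2) (t : R) : R :=
  let q := gam t in
  let dlam := fst (eta t) * pd2 0 (lam F g1 g2) q + snd (eta t) * pd2 1 (lam F g1 g2) q in
  let gh i := fun s => match i with O => c0 (F (gam s)) | 1%nat => c1 (F (gam s)) | _ => c2 (F (gam s)) end in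
  let gh1 := mk3 (Derive (gh 0%nat) t) (Derive (gh 1%nat) t) (Derive (gh 2%nat) t) in
  let gh2 := mk3 (Derive_n (gh 0%nat) 2 t) (Derive_n (gh 1%nat) 2 t) (Derive_n (gh 2%nat) 2 t) in
  sgn dlam * det3 gh1 gh2 (euc_normal g1 g2 q) / (normE gh1) ^ 3.

(* Main.v *)
Require Import Defs.
From Stdlib Require Import Reals Lra Psatz Classical.
From Coquelicot Require Import Coquelicot.
Open Scope R_scope.

Lemma open_proj1 (U : pt2 -> Prop) : open U -> open (proj1U U).
Proof.
  intros HU x [v Hv]. destruct (HU _ Hv) as [e He].
  exists e. intros y Hy. exists v. apply He. split; [exact Hy| apply ball_center].
Qed.

Lemma open_proj2 (U : pt2 -> Prop) : open U -> open (proj2U U).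
Proof.
  intros HU x [v Hv]. destruct (HU _ Hv) as [e He].
  exists e. intros y Hy. exists v. apply He. split; [apply ball_center | exact Hy].
Qed.

Lemma open_fst_lt (y : R) : @open (prod_UniformSpace R_UniformSpace R_UniformSpace) (fun q : pt2 => fst q < y).
Proof.
  apply (open_comp fst (fun u => u < y)).
  - intros [x1 x2] _. apply continuous_fst.
  - apply open_lt.
Qed.
Lemma open_fst_gt (y : R) : @open (prod_UniformSpace R_UniformSpace R_UniformSpace) (fun q : pt2 => y < fst q).
Proof.
  apply (open_comp fst (fun u => y < u)).
  - intros [x1 x2] _. apply continuous_fst.
  - apply open_gt.
Qed.
Lemma open_snd_lt (y : R) : @open (prod_UniformSpace R_UniformSpace R_UniformSpace) (fun q : pt2 => snd q < y).
Proof.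
  apply (open_comp snd (fun u => u < y)).
  - intros [x1 x2] _. apply continuous_snd.
  - apply open_lt.
Qed.
Lemma open_snd_gt (y : R) : @open (prod_UniformSpace R_UniformSpace R_UniformSpace) (fun q : pt2 => y < snd q).
Proof.
  apply (open_comp snd (fun u => y < u)).
  - intros [x1 x2] _. apply continuous_snd.
  - apply open_gt.
Qed.

Lemma interval_proj1 (U : pt2 -> Prop) : connected2 U ->
  forall x y z, proj1U U x -> proj1U U z -> x <= y <= z -> proj1U U y.
Proof.
  intros HC x y z Hx Hz Hy. destruct (classic (proj1U U y)) as [H|H]; [exact H|exfalso].
  destruct (HC (fun q => fst q < y) (fun q => y < fst q) (open_fst_lt y) (open_fst_gt y)) as [HA|HB].
  - intros [q1 q2] Hq. simpl. destruct (Rtotal_order q1 y) as [h|[h|h]]; auto.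
    subst. exfalso; apply H; exists q2; exact Hq.
  - intros q _ h1 h2; lra.
  - destruct Hz as [v Hv]. specialize (HA _ Hv). simpl in HA.
    destruct (Req_dec y z); [subst; apply H; exists v; exact Hv| lra].
  - destruct Hx as [v Hv]. specialize (HB _ Hv). simpl in HB.
    destruct (Req_dec y x); [subst; apply H; exists v; exact Hv| lra].
Qed.

Lemma interval_proj2 (U : pt2 -> Prop) : connected2 U ->
  forall x y z, proj2U U x -> proj2U U z -> x <= y <= z -> proj2U U y.
Proof.
  intros HC x y z Hx Hz Hy. destruct (classic (proj2U U y)) as [H|H]; [exact H|exfalso].
  destruct (HC (fun q => snd q < y) (fun q => y < snd q) (open_snd_lt y) (open_snd_gt y)) as [HA|HB].
  - intros [q1 q2] Hq. simpl. destruct (Rtotal_order q2 y) as [h|[h|h]]; auto.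
    subst. exfalso; apply H; exists q1; exact Hq.
  - intros q _ h1 h2; lra.
  - destruct Hz as [v Hv]. specialize (HA _ Hv). simpl in HA.
    destruct (Req_dec y z); [subst; apply H; exists v; exact Hv| lra].
  - destruct Hx as [v Hv]. specialize (HB _ Hv). simpl in HB.
    destruct (Req_dec y x); [subst; apply H; exists v; exact Hv| lra].
Qed.
Definition intervalP (I : R -> Prop) := forall x y z, I x -> I z -> x <= y <= z -> I y.

Lemma ftc (I : R -> Prop) (P : R -> R) x0 x : open I -> intervalP I ->
  (forall y, I y -> continuous P y) -> I x0 -> I x ->
  is_derive (fun t => RInt P x0 t) x (P x).
Proof.
  intros Ho Hi Hc H0 Hx. apply (is_derive_RInt P (fun t => RInt P x0 t) x0 x).
  - generalize (Ho x Hx). apply filter_imp. intros b Hb.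
    apply (RInt_correct P x0 b). apply (ex_RInt_continuous P x0 b). intros z Hz. apply Hc.
    destruct (Rle_dec x0 b).
    + rewrite Rmin_left in Hz by lra. rewrite Rmax_right in Hz by lra.
      apply (Hi x0 z b); auto.
    + rewrite Rmin_right in Hz by lra. rewrite Rmax_left in Hz by lra.
      apply (Hi b z x0); auto.
  - apply Hc; auto.
Qed.

Lemma smooth1 I g x : smooth_on I g -> I x -> ex_derive g x.
Proof. intros H Hx. exact (H 1%nat x Hx). Qed.
Lemma smooth2d I g x : smooth_on I g -> I x -> ex_derive (Derive g) x.
Proof. intros H Hx. exact (H 2%nat x Hx). Qed.

Lemma sgn_pos x : 0 < x -> sgn x = 1.
Proof. intros. unfold sgn. destruct (Rlt_dec 0 x); [reflexivity|lra]. Qed.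
Lemma sgn_neg x : x < 0 -> sgn x = -1.
Proof. intros. unfold sgn. destruct (Rlt_dec 0 x); [lra|]. destruct (Rlt_dec x 0); [reflexivity|lra]. Qed.
Lemma sgn_zero : sgn 0 = 0.
Proof. unfold sgn. destruct (Rlt_dec 0 0); [lra|]. destruct (Rlt_dec 0 0); [lra|reflexivity]. Qed.

Lemma sgn_mul_pos x C m : x <> 0 -> 0 < x * C * m -> 0 < sgn x * C * m.
Proof.
  intros Hx H. destruct (Rlt_dec 0 x).
  - rewrite sgn_pos by lra. assert (0 < C*m) by nra. lra.
  - rewrite sgn_neg by lra. assert (C*m < 0) by nra. lra.
Qed.

Lemma prod_pos_l k m : 0 < k -> 0 < k * m -> 0 < m.
Proof. intros H1 H2. destruct (Rle_dec m 0); [|lra]. assert (k*m <= 0).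
  { replace (k*m) with (-(k*(-m))) by ring. assert (0 <= k*(-m)) by (apply Rmult_le_pos; lra). lra. } lra. Qed.
Lemma prod_neg_l k m : k < 0 -> 0 < k * m -> m < 0.
Proof. intros H1 H2. destruct (Rle_dec 0 m); [|lra]. assert (k*m <= 0).
  { replace (k*m) with (-((-k)*m)) by ring. assert (0 <= (-k)*m) by (apply Rmult_le_pos; lra). lra. } lra. Qed.

Lemma final_alg (a b w1 w2 p1 p2 x1 x2 e1 e2 sq sn nr: R):
 a*b = 1 -> w1<>0 -> w2<>0 -> 0<sq -> 0<sn -> 0<nr ->
 ~ (x1 = 0 /\ x2 = 0) ->
 p1*x1*b + a*p2*x2 = 0 ->
 e1*w1*a^2 = e2*w2 ->
 x1*e2 - x2*e1 > 0 ->
 forall k, k = sgn (e1*(/2*w1*w2*(-(p1*b))*sq) + e2*(/2*w1*w2*(-(a*p2))*sq)) *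
    ((/sn) * (-(w1*x1 - w2*x2/a^2)*(1+a^2)^2*(p1*x1^2*w1+p2*x2^2*w2)/a)) / nr^3 ->
 (0 < k -> 0 < w1*w2*p1*p2) /\ (k < 0 -> w1*w2*p1*p2 < 0) /\ (k = 0 <-> p1 = 0 \/ p2 = 0).
Proof.
  intros Hab Hw1 Hw2 Hsq Hsn Hnr Hx Hc He Hdet k Hk.
  assert (Ha : a <> 0) by (intro; subst; lra).
  assert (Hb : b = / a) by (field_simplify_eq; [lra|auto]).
  subst b.
  set (rho := w1*x1 - w2*x2/a^2).
  set (T := p1*x1^2*w1+p2*x2^2*w2).
  set (Z := p1*w2 + a^4*p2*w1).
  assert (Hc' : p1*x1 = -(a^2*p2*x2)).
  { apply (Rmult_eq_reg_l (/a)); [|apply Rinv_neq_0_compat; auto].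
    field_simplify_eq; auto. field_simplify_eq in Hc; auto. lra. }
  assert (He2' : e2 = e1*w1*a^2/w2) by (rewrite He; field; auto).
  assert (Hrho : rho*e2 = w1*(x1*e2 - x2*e1)).
  { unfold rho. rewrite He2'. field. auto. }
  assert (HT : T*p1 = p2*x2^2*Z).
  { unfold T, Z. transitivity ((p1*x1)^2*w1 + p2*x2^2*w2*p1); [ring|]. rewrite Hc'. ring. }
  assert (Hrz : rho*p1*a^2 = -(x2*Z)).
  { unfold rho, Z. transitivity (w1*(p1*x1)*a^2 - w2*x2*p1); [field; auto|]. rewrite Hc'. ring. }
  assert (HD : e1*(/2*w1*w2*(-(p1*/a))*sq) + e2*(/2*w1*w2*(-(a*p2))*sq) = -(/2*w2*sq*e2*Z/a^3)).
  { unfold Z. rewrite He2'. field. auto. }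
  rewrite HD in Hk.
  assert (Hk2 : k = sgn (-(/2*w2*sq*e2*Z/a^3)) * (-(rho*(1+a^2)^2*T/(a*sn*nr^3)))).
  { rewrite Hk. unfold rho, T. field. repeat split; auto; lra. }
  clear Hk HD.
  destruct (Req_dec p1 0) as [Hp1|Hp1].
  { assert (T = 0).
    { unfold T. rewrite Hp1 in Hc'. assert (p2*x2 = 0).
      { assert (a^2*(p2*x2) = 0) by lra. apply Rmult_integral in H. destruct H; auto.
        exfalso; apply (pow_nonzero a 2); auto. }
      rewrite Hp1. replace (p2*x2^2*w2) with ((p2*x2)*x2*w2) by ring. rewrite H. ring. }
    assert (k = 0) by (rewrite Hk2, H; field; split; lra).
    rewrite H0, Hp1. split; [lra|split;[lra|]]. split; auto. }
  destruct (Req_dec p2 0) as [Hp2|Hp2].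
  { assert (T = 0).
    { unfold T. rewrite Hp2 in Hc'. assert (p1*x1 = 0) by lra.
      rewrite Hp2. replace (p1*x1^2*w1) with ((p1*x1)*x1*w1) by ring. rewrite H. ring. }
    assert (k = 0) by (rewrite Hk2, H; field; split; lra).
    rewrite H0, Hp2. split; [lra|split;[lra|]]. split; auto. }
  assert (Hx2 : x2 <> 0).
  { intro Hx2. apply Hx. split; auto. rewrite Hx2 in Hc'.
    assert (p1*x1 = 0) by lra. apply Rmult_integral in H. destruct H; [contradiction|auto]. }
  assert (He2 : e2 <> 0).
  { intro He2. rewrite He2 in He, Hdet. assert (e1 = 0).
    { assert (e1*(w1*a^2) = 0) by lra. apply Rmult_integral in H. destruct H; auto.
      exfalso. apply Rmult_integral in H. destruct H; auto. apply (pow_nonzero a 2); auto. }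
    rewrite H in Hdet. lra. }
  assert (Hrho0 : rho <> 0).
  { intro Hr. rewrite Hr in Hrho. assert (x1*e2 - x2*e1 = 0).
    { assert (w1*(x1*e2 - x2*e1) = 0) by lra. apply Rmult_integral in H. destruct H; auto. contradiction. }
    lra. }
  assert (HZ : Z <> 0).
  { intro HZ. rewrite HZ in Hrz. apply Hrho0.
    assert (rho*(p1*a^2) = 0) by lra. apply Rmult_integral in H. destruct H; auto.
    exfalso. apply Rmult_integral in H. destruct H; auto. apply (pow_nonzero a 2); auto. }
  set (Dv := -(/2*w2*sq*e2*Z/a^3)).
  set (Cv := -(rho*(1+a^2)^2*T/(a*sn*nr^3))).
  assert (HDv : Dv <> 0).
  { unfold Dv. intro H. apply Ropp_eq_0_compat in H. rewrite Ropp_involutive in H.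
    unfold Rdiv in H. repeat (apply Rmult_integral in H; destruct H as [H|H]); try lra.
    apply Rinv_neq_0_compat in H; auto. apply pow_nonzero; auto. }
  assert (Hsqp : forall y, y <> 0 -> 0 < y^2).
  { intros y Hy. replace (y^2) with (Rsqr y) by (unfold Rsqr; ring). apply Rsqr_pos_lt; auto. }
  assert (Hprod : 0 < Dv * Cv * (w1*w2*p1*p2)).
  { assert (E : Dv * Cv * (w1*w2*p1*p2) =
       (/2*sq*(1+a^2)^2/((a^2)^2*sn*nr^3)) * w2^2 * (rho*e2*w1) * Z * (T*p1) * p2).
    { unfold Dv, Cv. field. repeat split; auto; lra. }
    rewrite E, Hrho, HT. clear E.
    assert (0 < /2*sq*(1+a^2)^2/((a^2)^2*sn*nr^3)).
    { assert (0 < a^2) by auto. assert (0 < nr^3) by (apply pow_lt; auto).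
      assert (0 < 1 + a^2) by lra.
      assert (0 < (1+a^2)^2) by (apply Hsqp; lra).
      apply Rdiv_lt_0_compat. apply Rmult_lt_0_compat; [apply Rmult_lt_0_compat; lra|lra].
      assert (0 < (a^2)^2) by (apply Hsqp; lra).
      apply Rmult_lt_0_compat; [apply Rmult_lt_0_compat|]; auto. }
    replace (/ 2 * sq * (1 + a ^ 2) ^ 2 / ((a ^ 2) ^ 2 * sn * nr ^ 3) * w2 ^ 2 *
      (w1 * (x1 * e2 - x2 * e1) * w1) * Z * (p2 * x2 ^ 2 * Z) * p2)
    with ((/ 2 * sq * (1 + a ^ 2) ^ 2 / ((a ^ 2) ^ 2 * sn * nr ^ 3)) *
      (w1*w2*Z*p2*x2)^2 * (x1 * e2 - x2 * e1)) by ring.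
    apply Rmult_lt_0_compat; [apply Rmult_lt_0_compat|lra]; auto.
    apply Hsqp. repeat (apply Rmult_integral_contrapositive; split); auto. }
  assert (Hkm : 0 < k * (w1*w2*p1*p2)).
  { assert (Hk3 : k = sgn Dv * Cv) by exact Hk2. rewrite Hk3. apply sgn_mul_pos; auto. }
  split; [intro; apply (prod_pos_l k); auto|split; [intro; apply (prod_neg_l k); auto|]].
  split; [intro H; rewrite H in Hkm; lra| intros [H|H]; contradiction].
Qed.
Lemma Dlin (K1 K2 : R) (Phi : R -> R) x L : is_derive Phi x L ->
  Derive (fun t => K1 + /2 * Phi t + K2) x = /2 * L.
Proof.
  intros H. assert (HD : Derive Phi x = L) by (apply is_derive_unique; auto).
  apply is_derive_unique. auto_derive.
  - exists L; auto.
  - match goal with |- context [Derive ?f x] => replace (Derive f x) with L by (symmetry; apply is_derive_unique; exact H) end. ring.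
Qed.

Ltac rwD H := match type of H with is_derive _ ?x0 ?l => match goal with |- context [Derive ?f x0] => replace (Derive f x0) with l by (symmetry; apply is_derive_unique; exact H) end end.

Lemma Qpos a b : 0 < (1 - a*b)^2 + 2*(a+b)^2.
Proof.
  destruct (Req_dec (a+b) 0) as [H|H].
  - assert (b = -a) by lra. subst. assert (0 <= a^2) by (apply pow2_ge_0). 
    replace (1 - a * - a) with (1 + a^2) by ring. assert (0 < (1+a^2)^2).
    { apply pow_lt. lra. } assert (0 <= 2*(a + - a)^2) by (assert (0 <= (a + - a)^2) by apply pow2_ge_0; lra). lra.
  - assert (0 < (a+b)^2).
    { replace ((a+b)^2) with (Rsqr (a+b)) by (unfold Rsqr; ring). apply Rsqr_pos_lt; auto. }
    assert (0 <= (1 - a*b)^2) by apply pow2_ge_0. lra.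
Qed.

Section MF.
Set Default Proof Using "All".
Variables (g1 g2 w1 w2 : R -> R) (u0 v0 : R) (c : pt3) (I1 I2 : R -> Prop).
Hypotheses (HI1o : open I1) (HI1i : intervalP I1) (HI2o : open I2) (HI2i : intervalP I2)
 (Hg1 : forall x, I1 x -> ex_derive g1 x) (Hw1 : forall x, I1 x -> ex_derive w1 x)
 (Hg2 : forall x, I2 x -> ex_derive g2 x) (Hw2 : forall x, I2 x -> ex_derive w2 x)
 (Hu0 : I1 u0) (Hv0 : I2 v0).

Let F := minface g1 g2 w1 w2 u0 v0 c.

Lemma cont_ex (f : R -> R) (x : R) : ex_derive f x -> continuous f x.
Proof. intros H. apply (@ex_derive_continuous R_AbsRing R_NormedModule). exact H. Qed.

Lemma ftc1 (Pf : R -> R) : (forall x, I1 x -> ex_derive Pf x) -> forall x, I1 x ->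
  is_derive (fun t => RInt Pf u0 t) x (Pf x).
Proof. intros H x Hx. apply ftc with I1; auto. intros y Hy; apply cont_ex; auto. Qed.
Lemma ftc2 (Pf : R -> R) : (forall x, I2 x -> ex_derive Pf x) -> forall x, I2 x ->
  is_derive (fun t => RInt Pf v0 t) x (Pf x).
Proof. intros H x Hx. apply ftc with I2; auto. intros y Hy; apply cont_ex; auto. Qed.

Lemma exP0 : forall x, I1 x -> ex_derive (fun s => (-1 - g1 s ^ 2) * w1 s) x.
Proof. intros x Hx. auto_derive. repeat split; auto. Qed.
Lemma exP1 : forall x, I1 x -> ex_derive (fun s => (1 - g1 s ^ 2) * w1 s) x.
Proof. intros x Hx. auto_derive. repeat split; auto. Qed.
Lemma exP2 : forall x, I1 x -> ex_derive (fun s => 2 * g1 s * w1 s) x.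
Proof. intros x Hx. auto_derive. repeat split; auto. Qed.
Lemma exQ0 : forall x, I2 x -> ex_derive (fun s => (1 + g2 s ^ 2) * w2 s) x.
Proof. intros x Hx. auto_derive. repeat split; auto. Qed.
Lemma exQ1 : forall x, I2 x -> ex_derive (fun s => (1 - g2 s ^ 2) * w2 s) x.
Proof. intros x Hx. auto_derive. repeat split; auto. Qed.
Lemma exQ2 : forall x, I2 x -> ex_derive (fun s => -2 * g2 s * w2 s) x.
Proof. intros x Hx. auto_derive. repeat split; auto. Qed.

Lemma Dlin2 (K1 K2 : R) (Phi : R -> R) x L : is_derive Phi x L ->
  Derive (fun t => K1 + K2 + /2 * Phi t) x = /2 * L.
Proof.
  intros H. apply is_derive_unique. auto_derive.
  - exists L; auto.
  - rwD H. ring.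
Qed.

Lemma fu_F s v : I1 s -> fu F (s, v) =
  mk3 (/2 * ((-1 - g1 s ^ 2) * w1 s)) (/2 * ((1 - g1 s ^ 2) * w1 s)) (/2 * (2 * g1 s * w1 s)).
Proof.
  intros Hs. unfold fu, dF, ipd2, List.fold_right, pd2, upd2, crd2, F.
  cbn [fst snd minface c0 Defs.c1 c2 mk3].
  rewrite (Dlin _ _ _ _ _ (ftc1 _ exP0 s Hs)).
  rewrite (Dlin _ _ _ _ _ (ftc1 _ exP1 s Hs)).
  rewrite (Dlin _ _ _ _ _ (ftc1 _ exP2 s Hs)). reflexivity.
Qed.

Lemma fv_F u s : I2 s -> fv F (u, s) =
  mk3 (/2 * ((1 + g2 s ^ 2) * w2 s)) (/2 * ((1 - g2 s ^ 2) * w2 s)) (/2 * (-2 * g2 s * w2 s)).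
Proof.
  intros Hs. unfold fv, dF, ipd2, List.fold_right, pd2, upd2, crd2, F.
  cbn [fst snd minface c0 Defs.c1 c2 mk3].
  rewrite (Dlin2 _ _ _ _ _ (ftc2 _ exQ0 s Hs)).
  rewrite (Dlin2 _ _ _ _ _ (ftc2 _ exQ1 s Hs)).
  rewrite (Dlin2 _ _ _ _ _ (ftc2 _ exQ2 s Hs)). reflexivity.
Qed.

Lemma fuv_F q : I2 (snd q) -> fuv F q = mk3 0 0 0.
Proof.
  intros Hq. unfold fuv, dF, ipd2, List.fold_right, pd2, upd2, crd2, F.
  cbn [fst snd minface c0 Defs.c1 c2 mk3].
  f_equal.
  - transitivity (Derive (fun _ : R => /2 * ((1 + g2 (snd q) ^ 2) * w2 (snd q))) (fst q));
    [apply Derive_ext; intro t; apply Dlin2; apply (ftc2 _ exQ0 _ Hq) | apply Derive_const].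
  - transitivity (Derive (fun _ : R => /2 * ((1 - g2 (snd q) ^ 2) * w2 (snd q))) (fst q));
    [apply Derive_ext; intro t; apply Dlin2; apply (ftc2 _ exQ1 _ Hq) | apply Derive_const].
  - transitivity (Derive (fun _ : R => /2 * (-2 * g2 (snd q) * w2 (snd q))) (fst q));
    [apply Derive_ext; intro t; apply Dlin2; apply (ftc2 _ exQ2 _ Hq) | apply Derive_const].
Qed.

Lemma loc1 x (P Q : R -> R) : I1 x -> (forall t, I1 t -> P t = Q t) -> locally x (fun t => P t = Q t).
Proof. intros Hx H. generalize (HI1o x Hx). apply filter_imp. exact H. Qed.
Lemma loc2 x (P Q : R -> R) : I2 x -> (forall t, I2 t -> P t = Q t) -> locally x (fun t => P t = Q t).
Proof. intros Hx H. generalize (HI2o x Hx). apply filter_imp. exact H. Qed.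

Lemma fuu_F u v : I1 u -> fuu F (u, v) =
  mk3 (/2*((-2*g1 u*Derive g1 u)*w1 u + (-1 - g1 u^2)*Derive w1 u))
      (/2*((-2*g1 u*Derive g1 u)*w1 u + (1 - g1 u^2)*Derive w1 u))
      (/2*(2*Derive g1 u*w1 u + 2*g1 u*Derive w1 u)).
Proof.
  intros Hu. unfold fuu, dF, ipd2, List.fold_right, pd2, upd2, crd2, F.
  cbn [fst snd minface c0 Defs.c1 c2 mk3].
  f_equal.
  - transitivity (Derive (fun t => /2 * ((-1 - g1 t ^ 2) * w1 t)) u);
    [apply Derive_ext_loc; apply loc1; auto; intros t Ht; apply Dlin; apply (ftc1 _ exP0 _ Ht)|].
    apply is_derive_unique; auto_derive; try (repeat split; auto);
    change (fun x : R => g1 x) with g1; change (fun x : R => w1 x) with w1; ring.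
  - transitivity (Derive (fun t => /2 * ((1 - g1 t ^ 2) * w1 t)) u);
    [apply Derive_ext_loc; apply loc1; auto; intros t Ht; apply Dlin; apply (ftc1 _ exP1 _ Ht)|].
    apply is_derive_unique; auto_derive; try (repeat split; auto);
    change (fun x : R => g1 x) with g1; change (fun x : R => w1 x) with w1; ring.
  - transitivity (Derive (fun t => /2 * (2 * g1 t * w1 t)) u);
    [apply Derive_ext_loc; apply loc1; auto; intros t Ht; apply Dlin; apply (ftc1 _ exP2 _ Ht)|].
    apply is_derive_unique; auto_derive; try (repeat split; auto);
    change (fun x : R => g1 x) with g1; change (fun x : R => w1 x) with w1; ring.
Qed.

Lemma fvv_F u v : I2 v -> fvv F (u, v) =
  mk3 (/2*((2*g2 v*Derive g2 v)*w2 v + (1 + g2 v^2)*Derive w2 v))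
      (/2*((-2*g2 v*Derive g2 v)*w2 v + (1 - g2 v^2)*Derive w2 v))
      (/2*(-2*Derive g2 v*w2 v + -2*g2 v*Derive w2 v)).
Proof.
  intros Hv. unfold fvv, dF, ipd2, List.fold_right, pd2, upd2, crd2, F.
  cbn [fst snd minface c0 Defs.c1 c2 mk3].
  f_equal.
  - transitivity (Derive (fun t => /2 * ((1 + g2 t ^ 2) * w2 t)) v);
    [apply Derive_ext_loc; apply loc2; auto; intros t Ht; apply Dlin2; apply (ftc2 _ exQ0 _ Ht)|].
    apply is_derive_unique; auto_derive; try (repeat split; auto);
    change (fun x : R => g2 x) with g2; change (fun x : R => w2 x) with w2; ring.
  - transitivity (Derive (fun t => /2 * ((1 - g2 t ^ 2) * w2 t)) v);
    [apply Derive_ext_loc; apply loc2; auto; intros t Ht; apply Dlin2; apply (ftc2 _ exQ1 _ Ht)|].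
    apply is_derive_unique; auto_derive; try (repeat split; auto);
    change (fun x : R => g2 x) with g2; change (fun x : R => w2 x) with w2; ring.
  - transitivity (Derive (fun t => /2 * (-2 * g2 t * w2 t)) v);
    [apply Derive_ext_loc; apply loc2; auto; intros t Ht; apply Dlin2; apply (ftc2 _ exQ2 _ Ht)|].
    apply is_derive_unique; auto_derive; try (repeat split; auto);
    change (fun x : R => g2 x) with g2; change (fun x : R => w2 x) with w2; ring.
Qed.

Lemma cross_formula a b x y : cross
  (mk3 (/2 * ((-1 - a ^ 2) * x)) (/2 * ((1 - a ^ 2) * x)) (/2 * (2 * a * x)))
  (mk3 (/2 * ((1 + b ^ 2) * y)) (/2 * ((1 - b ^ 2) * y)) (/2 * (-2 * b * y))) =
  mk3 (/4*x*y*(-2*(a+b)*(1-a*b))) (/4*x*y*(2*(a-b)*(1-a*b))) (/4*x*y*(-2*(1-a*b)*(1+a*b))).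
Proof. unfold cross, mk3, c0, Defs.c1, c2; simpl. f_equal; [f_equal|]; field. Qed.

Lemma sing_F u v : I1 u -> I2 v -> w1 u <> 0 -> w2 v <> 0 ->
  (singular F (u, v) <-> g1 u * g2 v = 1).
Proof.
  intros Hu Hv Hw1u Hw2v. unfold singular. rewrite (fu_F u v Hu), (fv_F u v Hv), cross_formula.
  set (a := g1 u). set (b := g2 v). set (x := w1 u). set (y := w2 v).
  unfold mk3. split.
  - intros H. injection H as H0 H1 H2.
    assert (Hk : /4*x*y <> 0).
    { apply Rmult_integral_contrapositive; split; [apply Rmult_integral_contrapositive; split|]; auto; lra. }
    assert (E0 : (a+b)*(1-a*b) = 0).
    { assert (/4*x*y*((a+b)*(1-a*b)) = 0) by (transitivity (-/2 * (/4*x*y*(-2*(a+b)*(1-a*b)))); [field | rewrite H0; ring]).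
      apply Rmult_integral in H. destruct H; [contradiction|auto]. }
    assert (E1 : (a-b)*(1-a*b) = 0).
    { assert (/4*x*y*((a-b)*(1-a*b)) = 0) by (transitivity (/2 * (/4*x*y*(2*(a-b)*(1-a*b)))); [field | rewrite H1; ring]).
      apply Rmult_integral in H. destruct H; [contradiction|auto]. }
    assert (E2 : (1+a*b)*(1-a*b) = 0).
    { assert (/4*x*y*((1+a*b)*(1-a*b)) = 0) by (transitivity (-/2 * (/4*x*y*(-2*(1-a*b)*(1+a*b)))); [field | rewrite H2; ring]).
      apply Rmult_integral in H. destruct H; [contradiction|auto]. }
    destruct (Req_dec (1 - a*b) 0) as [Z|Z]; [lra|].
    apply Rmult_integral in E0; apply Rmult_integral in E1; apply Rmult_integral in E2.
    destruct E0 as [E0|E0]; [|contradiction]. destruct E1 as [E1|E1]; [|contradiction].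
    destruct E2 as [E2|E2]; [|contradiction].
    assert (a = 0) by lra. assert (b = 0) by lra. subst. rewrite H, H3 in E2. lra.
  - intros H. assert (Z : 1 - a*b = 0) by lra. rewrite Z. f_equal; [f_equal|]; ring.
Qed.



Lemma det_formula a b x y : det3
  (mk3 (/2 * ((-1 - a ^ 2) * x)) (/2 * ((1 - a ^ 2) * x)) (/2 * (2 * a * x)))
  (mk3 (/2 * ((1 + b ^ 2) * y)) (/2 * ((1 - b ^ 2) * y)) (/2 * (-2 * b * y)))
  (scal3 (/ sqrt ((1 - a * b) ^ 2 + 2 * (a + b) ^ 2)) (mk3 (- a - b) (a - b) (- 1 - a * b))) =
  (1 - a*b) * (/2 * x * y * sqrt ((1 - a*b)^2 + 2*(a+b)^2)).
Proof.
  unfold det3. rewrite cross_formula. unfold dotE, scal3. cbn [mk3 c0 Defs.c1 c2 fst snd].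
  set (Q := (1 - a*b)^2 + 2*(a+b)^2).
  assert (HQ : 0 < Q) by apply Qpos.
  assert (Hs : sqrt Q * sqrt Q = Q) by (apply sqrt_sqrt; lra).
  assert (Hs0 : 0 < sqrt Q) by (apply sqrt_lt_R0; lra).
  transitivity ((1 - a*b) * (/2*x*y) * Q * / sqrt Q).
  { unfold Q. field. fold Q. lra. }
  set (sq := sqrt Q) in *. rewrite <- Hs. field. lra.
Qed.

Lemma lam_F s v : I1 s -> I2 v -> lam F g1 g2 (s, v) =
  (1 - g1 s * g2 v) * (/2 * w1 s * w2 v * sqrt ((1 - g1 s * g2 v)^2 + 2*(g1 s + g2 v)^2)).
Proof.
  intros Hs Hv. unfold lam. rewrite (fu_F s v Hs), (fv_F s v Hv). unfold euc_normal.
  cbn [fst snd]. apply det_formula.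
Qed.

Lemma deriv_zero_factor (f g : R -> R) x df : is_derive f x df -> ex_derive g x -> f x = 0 ->
  Derive (fun s => f s * g s) x = df * g x.
Proof.
  intros Hf [dg Hg] H0. apply is_derive_unique.
  assert (E : df * g x = df * g x + f x * dg) by (rewrite H0; ring). rewrite E.
  apply (is_derive_mult f g x df dg Hf Hg). intros; apply Rmult_comm.
Qed.

Lemma pd2_lam0 u v : I1 u -> I2 v -> g1 u * g2 v = 1 ->
  pd2 0 (lam F g1 g2) (u, v) =
  -(Derive g1 u * g2 v) * (/2 * w1 u * w2 v * sqrt ((1 - g1 u * g2 v)^2 + 2*(g1 u + g2 v)^2)).
Proof.
  intros Hu Hv H1. unfold pd2, upd2, crd2. cbn [fst snd].
  rewrite (Derive_ext_loc _ (fun s => (1 - g1 s * g2 v) *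
     (/2 * w1 s * w2 v * sqrt ((1 - g1 s * g2 v)^2 + 2*(g1 s + g2 v)^2)))).
  2: { apply loc1; auto. intros t Ht. apply lam_F; auto. }
  apply (deriv_zero_factor (fun s => 1 - g1 s * g2 v)
    (fun s => /2 * w1 s * w2 v * sqrt ((1 - g1 s * g2 v)^2 + 2*(g1 s + g2 v)^2))).
  - auto_derive. auto. change (fun x : R => g1 x) with g1. ring.
  - auto_derive. repeat split; auto. apply Qpos.
  - lra.
Qed.

Lemma pd2_lam1 u v : I1 u -> I2 v -> g1 u * g2 v = 1 ->
  pd2 1 (lam F g1 g2) (u, v) =
  -(g1 u * Derive g2 v) * (/2 * w1 u * w2 v * sqrt ((1 - g1 u * g2 v)^2 + 2*(g1 u + g2 v)^2)).
Proof.
  intros Hu Hv H1. unfold pd2, upd2, crd2. cbn [fst snd].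
  rewrite (Derive_ext_loc _ (fun s => (1 - g1 u * g2 s) *
     (/2 * w1 u * w2 s * sqrt ((1 - g1 u * g2 s)^2 + 2*(g1 u + g2 s)^2)))).
  2: { apply loc2; auto. intros t Ht. apply lam_F; auto. }
  apply (deriv_zero_factor (fun s => 1 - g1 u * g2 s)
    (fun s => /2 * w1 u * w2 s * sqrt ((1 - g1 u * g2 s)^2 + 2*(g1 u + g2 s)^2))).
  - auto_derive. auto. change (fun x : R => g2 x) with g2. ring.
  - auto_derive. repeat split; auto. apply Qpos.
  - lra.
Qed.

Definition gaussE (E Fm G L M N : R) : R :=
  let D := E*G - Fm*Fm in
  ((G*L - Fm*M)/D)*((-Fm*M + E*N)/D) - ((G*M - Fm*N)/D)*((-Fm*L + E*M)/D).

Lemma gauss_eq (H : pt2 -> pt3) q : gauss H q =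
  gaussE (dotL (fu H q) (fu H q)) (dotL (fu H q) (fv H q)) (dotL (fv H q) (fv H q))
    (dotL (fuu H q) (lnormal H q)) (dotL (fuv H q) (lnormal H q)) (dotL (fvv H q) (lnormal H q)).
Proof. reflexivity. Qed.

Lemma gaussE_simp Fm L N : Fm <> 0 -> gaussE 0 Fm 0 L 0 N = -(L*N)/(Fm*Fm).
Proof. intros H. unfold gaussE. field. auto. Qed.

Lemma gauss_F u v : I1 u -> I2 v -> w1 u <> 0 -> w2 v <> 0 -> g1 u * g2 v <> 1 ->
  gauss F (u, v) = 4 * Derive g1 u * Derive g2 v / (w1 u * w2 v * (1 - g1 u * g2 v)^4).
Proof.
  intros Hu Hv Hx Hy H1. rewrite gauss_eq.
  assert (HE : dotL (fu F (u,v)) (fu F (u,v)) = 0).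
  { rewrite (fu_F u v Hu). unfold dotL. cbn [mk3 c0 Defs.c1 c2 fst snd]. ring. }
  assert (HG : dotL (fv F (u,v)) (fv F (u,v)) = 0).
  { rewrite (fv_F u v Hv). unfold dotL. cbn [mk3 c0 Defs.c1 c2 fst snd]. ring. }
  assert (HM : dotL (fuv F (u,v)) (lnormal F (u,v)) = 0).
  { rewrite (fuv_F (u,v) Hv). unfold dotL. cbn [mk3 c0 Defs.c1 c2 fst snd]. ring. }
  assert (HF : dotL (fu F (u,v)) (fv F (u,v)) = /2 * w1 u * w2 v * (1 - g1 u * g2 v)^2).
  { rewrite (fu_F u v Hu), (fv_F u v Hv). unfold dotL. cbn [mk3 c0 Defs.c1 c2 fst snd]. field. }
  assert (Hz : 1 - g1 u * g2 v <> 0) by lra.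
  assert (Hm : /2 * w1 u * w2 v * (1 - g1 u * g2 v)^2 <> 0).
  { apply Rmult_integral_contrapositive; split; [repeat (apply Rmult_integral_contrapositive; split); auto; lra | apply pow_nonzero; auto]. }
  rewrite HE, HG, HM, HF, gaussE_simp by auto.
  unfold lnormal.
  rewrite (fu_F u v Hu), (fv_F u v Hv), (fuu_F u v Hu), (fvv_F u v Hv), cross_formula.
  unfold dotL, scal3. cbn [mk3 c0 Defs.c1 c2 fst snd].
  set (a := g1 u) in *. set (b := g2 v) in *. set (x := w1 u) in *. set (y := w2 v) in *.
  set (p1 := Derive g1 u). set (p2 := Derive g2 v). set (d1 := Derive w1 u). set (d2 := Derive w2 v).
  set (m := /2*x*y*(1-a*b)^2) in *.
  match goal with |- context [sqrt ?E] => assert (Hs : sqrt E = Rabs m) end.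
  { rewrite <- sqrt_Rsqr_abs. f_equal. unfold Rsqr, m. field. }
  rewrite Hs.
  destruct (Rcase_abs m) as [Hn|Hn].
  - rewrite (Rabs_left m Hn). unfold m. field. repeat split; auto.
  - rewrite (Rabs_right m Hn). unfold m. field. repeat split; auto.
Qed.

Lemma D1gen (A B g1c g2c : R -> R) (K : R) s0 LA LB :
  is_derive A (g1c s0) LA -> is_derive B (g2c s0) LB -> ex_derive g1c s0 -> ex_derive g2c s0 ->
  Derive (fun s => K + /2 * A (g1c s) + /2 * B (g2c s)) s0 = /2*LA*Derive g1c s0 + /2*LB*Derive g2c s0.
Proof.
  intros HA HB H1 H2. apply is_derive_unique. auto_derive.
  - repeat split; auto; [exists LA | exists LB]; auto.
  - rwD HA. rwD HB. change (fun x : R => g1c x) with g1c. change (fun x : R => g2c x) with g2c. ring.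
Qed.

Lemma D2gen (P Q g1c g2c d1 d2 : R -> R) t dP dQ :
  is_derive P (g1c t) dP -> is_derive Q (g2c t) dQ -> ex_derive g1c t -> ex_derive g2c t ->
  ex_derive d1 t -> ex_derive d2 t ->
  Derive (fun s => /2 * P (g1c s) * d1 s + /2 * Q (g2c s) * d2 s) t =
  /2*(dP*Derive g1c t*d1 t + P (g1c t)*Derive d1 t) + /2*(dQ*Derive g2c t*d2 t + Q (g2c t)*Derive d2 t).
Proof.
  intros HA HB H1 H2 H3 H4. apply is_derive_unique. auto_derive.
  - repeat split; auto; [exists dP | exists dQ]; auto.
  - rwD HA. rwD HB. change (fun x : R => g1c x) with g1c. change (fun x : R => g2c x) with g2c.
    change (fun x : R => d1 x) with d1. change (fun x : R => d2 x) with d2. ring.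
Qed.

Lemma isdP0 x : I1 x -> is_derive (fun s => (-1 - g1 s ^ 2) * w1 s) x
   ((-2*g1 x*Derive g1 x)*w1 x + (-1 - g1 x^2)*Derive w1 x).
Proof. intros Hx. auto_derive. repeat split; auto.
  change (fun x : R => g1 x) with g1; change (fun x : R => w1 x) with w1; ring. Qed.
Lemma isdP1 x : I1 x -> is_derive (fun s => (1 - g1 s ^ 2) * w1 s) x
   ((-2*g1 x*Derive g1 x)*w1 x + (1 - g1 x^2)*Derive w1 x).
Proof. intros Hx. auto_derive. repeat split; auto.
  change (fun x : R => g1 x) with g1; change (fun x : R => w1 x) with w1; ring. Qed.
Lemma isdP2 x : I1 x -> is_derive (fun s => 2 * g1 s * w1 s) x
   (2*Derive g1 x*w1 x + 2*g1 x*Derive w1 x).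
Proof. intros Hx. auto_derive. repeat split; auto.
  change (fun x : R => g1 x) with g1; change (fun x : R => w1 x) with w1; ring. Qed.
Lemma isdQ0 x : I2 x -> is_derive (fun s => (1 + g2 s ^ 2) * w2 s) x
   ((2*g2 x*Derive g2 x)*w2 x + (1 + g2 x^2)*Derive w2 x).
Proof. intros Hx. auto_derive. repeat split; auto.
  change (fun x : R => g2 x) with g2; change (fun x : R => w2 x) with w2; ring. Qed.
Lemma isdQ1 x : I2 x -> is_derive (fun s => (1 - g2 s ^ 2) * w2 s) x
   ((-2*g2 x*Derive g2 x)*w2 x + (1 - g2 x^2)*Derive w2 x).
Proof. intros Hx. auto_derive. repeat split; auto.
  change (fun x : R => g2 x) with g2; change (fun x : R => w2 x) with w2; ring. Qed.
Lemma isdQ2 x : I2 x -> is_derive (fun s => -2 * g2 s * w2 s) x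
   (-2*Derive g2 x*w2 x + -2*g2 x*Derive w2 x).
Proof. intros Hx. auto_derive. repeat split; auto.
  change (fun x : R => g2 x) with g2; change (fun x : R => w2 x) with w2; ring. Qed.

Section Curve.
Variables (gam : R -> pt2) (ta tb : R).
Hypotheses (Hga : forall t, ta < t < tb -> ex_derive (fun s => fst (gam s)) t /\ ex_derive (Derive (fun s => fst (gam s))) t)
  (Hgb : forall t, ta < t < tb -> ex_derive (fun s => snd (gam s)) t /\ ex_derive (Derive (fun s => snd (gam s))) t)
  (HgU : forall t, ta < t < tb -> I1 (fst (gam t)) /\ I2 (snd (gam t))).

Lemma loc_int t : ta < t < tb -> locally t (fun s => ta < s < tb).
Proof.
  intros Ht. apply (open_and (fun s => ta < s) (fun s => s < tb)); [apply open_gt|apply open_lt|exact Ht].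
Qed.

Lemma gh1_F t : ta < t < tb ->
  mk3 (Derive (fun s => c0 (F (gam s))) t) (Derive (fun s => Defs.c1 (F (gam s))) t) (Derive (fun s => c2 (F (gam s))) t)
  = mk3 (/2 * ((-1 - g1 (fst (gam t)) ^ 2) * w1 (fst (gam t))) * Derive (fun s => fst (gam s)) t
         + /2 * ((1 + g2 (snd (gam t)) ^ 2) * w2 (snd (gam t))) * Derive (fun s => snd (gam s)) t)
        (/2 * ((1 - g1 (fst (gam t)) ^ 2) * w1 (fst (gam t))) * Derive (fun s => fst (gam s)) t
         + /2 * ((1 - g2 (snd (gam t)) ^ 2) * w2 (snd (gam t))) * Derive (fun s => snd (gam s)) t)
        (/2 * (2 * g1 (fst (gam t)) * w1 (fst (gam t))) * Derive (fun s => fst (gam s)) t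
         + /2 * (-2 * g2 (snd (gam t)) * w2 (snd (gam t))) * Derive (fun s => snd (gam s)) t).
Proof.
  intros Ht. destruct (HgU t Ht) as [H1 H2]. destruct (Hga t Ht) as [Ha _]. destruct (Hgb t Ht) as [Hb _].
  unfold F, minface. cbn [c0 Defs.c1 c2 mk3 fst snd].
  f_equal.
  - etransitivity; [apply (D1gen (fun x => RInt (fun s => (-1 - g1 s ^ 2) * w1 s) u0 x) (fun x => RInt (fun s => (1 + g2 s ^ 2) * w2 s) v0 x)
      (fun s => fst (gam s)) (fun s => snd (gam s)) _ t _ _ (ftc1 _ exP0 _ H1) (ftc2 _ exQ0 _ H2) Ha Hb)|reflexivity].
  - etransitivity; [apply (D1gen (fun x => RInt (fun s => (1 - g1 s ^ 2) * w1 s) u0 x) (fun x => RInt (fun s => (1 - g2 s ^ 2) * w2 s) v0 x)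
      (fun s => fst (gam s)) (fun s => snd (gam s)) _ t _ _ (ftc1 _ exP1 _ H1) (ftc2 _ exQ1 _ H2) Ha Hb)|reflexivity].
  - etransitivity; [apply (D1gen (fun x => RInt (fun s => 2 * g1 s * w1 s) u0 x) (fun x => RInt (fun s => -2 * g2 s * w2 s) v0 x)
      (fun s => fst (gam s)) (fun s => snd (gam s)) _ t _ _ (ftc1 _ exP2 _ H1) (ftc2 _ exQ2 _ H2) Ha Hb)|reflexivity].
Qed.

Lemma gh2_F t : ta < t < tb ->
  mk3 (Derive_n (fun s => c0 (F (gam s))) 2 t) (Derive_n (fun s => Defs.c1 (F (gam s))) 2 t) (Derive_n (fun s => c2 (F (gam s))) 2 t)
  = mk3 (/2*(((-2*g1 (fst (gam t))*Derive g1 (fst (gam t)))*w1 (fst (gam t)) + (-1 - g1 (fst (gam t))^2)*Derive w1 (fst (gam t)))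
              *Derive (fun s => fst (gam s)) t*Derive (fun s => fst (gam s)) t
           + ((-1 - g1 (fst (gam t)) ^ 2) * w1 (fst (gam t)))*Derive (Derive (fun s => fst (gam s))) t)
         + /2*(((2*g2 (snd (gam t))*Derive g2 (snd (gam t)))*w2 (snd (gam t)) + (1 + g2 (snd (gam t))^2)*Derive w2 (snd (gam t)))
              *Derive (fun s => snd (gam s)) t*Derive (fun s => snd (gam s)) t
           + ((1 + g2 (snd (gam t)) ^ 2) * w2 (snd (gam t)))*Derive (Derive (fun s => snd (gam s))) t))
        (/2*(((-2*g1 (fst (gam t))*Derive g1 (fst (gam t)))*w1 (fst (gam t)) + (1 - g1 (fst (gam t))^2)*Derive w1 (fst (gam t)))
              *Derive (fun s => fst (gam s)) t*Derive (fun s => fst (gam s)) t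
           + ((1 - g1 (fst (gam t)) ^ 2) * w1 (fst (gam t)))*Derive (Derive (fun s => fst (gam s))) t)
         + /2*(((-2*g2 (snd (gam t))*Derive g2 (snd (gam t)))*w2 (snd (gam t)) + (1 - g2 (snd (gam t))^2)*Derive w2 (snd (gam t)))
              *Derive (fun s => snd (gam s)) t*Derive (fun s => snd (gam s)) t
           + ((1 - g2 (snd (gam t)) ^ 2) * w2 (snd (gam t)))*Derive (Derive (fun s => snd (gam s))) t))
        (/2*((2*Derive g1 (fst (gam t))*w1 (fst (gam t)) + 2*g1 (fst (gam t))*Derive w1 (fst (gam t)))
              *Derive (fun s => fst (gam s)) t*Derive (fun s => fst (gam s)) t
           + (2 * g1 (fst (gam t)) * w1 (fst (gam t)))*Derive (Derive (fun s => fst (gam s))) t)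
         + /2*((-2*Derive g2 (snd (gam t))*w2 (snd (gam t)) + -2*g2 (snd (gam t))*Derive w2 (snd (gam t)))
              *Derive (fun s => snd (gam s)) t*Derive (fun s => snd (gam s)) t
           + (-2 * g2 (snd (gam t)) * w2 (snd (gam t)))*Derive (Derive (fun s => snd (gam s))) t)).
Proof.
  intros Ht. destruct (HgU t Ht) as [H1 H2]. destruct (Hga t Ht) as [Ha Ha']. destruct (Hgb t Ht) as [Hb Hb'].
  cbn [Derive_n].
  f_equal.
  - rewrite (Derive_ext_loc _ (fun s => /2 * ((-1 - g1 (fst (gam s)) ^ 2) * w1 (fst (gam s))) * Derive (fun s => fst (gam s)) s
         + /2 * ((1 + g2 (snd (gam s)) ^ 2) * w2 (snd (gam s))) * Derive (fun s => snd (gam s)) s)).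
    2: { generalize (loc_int t Ht). apply filter_imp. intros s Hs.
         pose proof (gh1_F s Hs) as E. apply (f_equal c0) in E. cbn [c0 mk3 fst] in E. exact E. }
    etransitivity; [apply (D2gen (fun s => (-1 - g1 s ^ 2) * w1 s) (fun s => (1 + g2 s ^ 2) * w2 s)
      (fun s => fst (gam s)) (fun s => snd (gam s)) (Derive (fun s => fst (gam s))) (Derive (fun s => snd (gam s)))
      t _ _ (isdP0 _ H1) (isdQ0 _ H2) Ha Hb Ha' Hb')|reflexivity].
  - rewrite (Derive_ext_loc _ (fun s => /2 * ((1 - g1 (fst (gam s)) ^ 2) * w1 (fst (gam s))) * Derive (fun s => fst (gam s)) s
         + /2 * ((1 - g2 (snd (gam s)) ^ 2) * w2 (snd (gam s))) * Derive (fun s => snd (gam s)) s)).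
    2: { generalize (loc_int t Ht). apply filter_imp. intros s Hs.
         pose proof (gh1_F s Hs) as E. apply (f_equal Defs.c1) in E. cbn [Defs.c1 mk3 fst snd] in E. exact E. }
    etransitivity; [apply (D2gen (fun s => (1 - g1 s ^ 2) * w1 s) (fun s => (1 - g2 s ^ 2) * w2 s)
      (fun s => fst (gam s)) (fun s => snd (gam s)) (Derive (fun s => fst (gam s))) (Derive (fun s => snd (gam s)))
      t _ _ (isdP1 _ H1) (isdQ1 _ H2) Ha Hb Ha' Hb')|reflexivity].
  - rewrite (Derive_ext_loc _ (fun s => /2 * (2 * g1 (fst (gam s)) * w1 (fst (gam s))) * Derive (fun s => fst (gam s)) s
         + /2 * (-2 * g2 (snd (gam s)) * w2 (snd (gam s))) * Derive (fun s => snd (gam s)) s)).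
    2: { generalize (loc_int t Ht). apply filter_imp. intros s Hs.
         pose proof (gh1_F s Hs) as E. apply (f_equal c2) in E. cbn [c2 mk3 snd] in E. exact E. }
    etransitivity; [apply (D2gen (fun s => 2 * g1 s * w1 s) (fun s => -2 * g2 s * w2 s)
      (fun s => fst (gam s)) (fun s => snd (gam s)) (Derive (fun s => fst (gam s))) (Derive (fun s => snd (gam s)))
      t _ _ (isdP2 _ H1) (isdQ2 _ H2) Ha Hb Ha' Hb')|reflexivity].
Qed.

End Curve.

End MF.

Lemma det_curve a b w1 w2 p1 p2 dw1 dw2 x1 x2 y1 y2 : a * b = 1 ->
  det3 (mk3 (/2 * ((-1 - a ^ 2) * w1) * x1
         + /2 * ((1 + b ^ 2) * w2) * x2)
        (/2 * ((1 - a ^ 2) * w1) * x1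
         + /2 * ((1 - b ^ 2) * w2) * x2)
        (/2 * (2 * a * w1) * x1
         + /2 * (-2 * b * w2) * x2)) (mk3 (/2*(((-2*a*p1)*w1 + (-1 - a^2)*dw1)
              *x1*x1
           + ((-1 - a ^ 2) * w1)*y1)
         + /2*(((2*b*p2)*w2 + (1 + b^2)*dw2)
              *x2*x2
           + ((1 + b ^ 2) * w2)*y2))
        (/2*(((-2*a*p1)*w1 + (1 - a^2)*dw1)
              *x1*x1
           + ((1 - a ^ 2) * w1)*y1)
         + /2*(((-2*b*p2)*w2 + (1 - b^2)*dw2)
              *x2*x2
           + ((1 - b ^ 2) * w2)*y2))
        (/2*((2*p1*w1 + 2*a*dw1)
              *x1*x1
           + (2 * a * w1)*y1)
         + /2*((-2*p2*w2 + -2*b*dw2)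
              *x2*x2
           + (-2 * b * w2)*y2)))
    (scal3 (/ sqrt ((1 - a * b) ^ 2 + 2 * (a + b) ^ 2)) (mk3 (- a - b) (a - b) (- 1 - a * b))) =
  / sqrt ((1 - a * b) ^ 2 + 2 * (a + b) ^ 2) *
    (-(w1*x1 - w2*x2/a^2)*(1+a^2)^2*(p1*x1^2*w1+p2*x2^2*w2)/a).
Proof.
  intros Hab. set (sq := sqrt ((1 - a * b) ^ 2 + 2 * (a + b) ^ 2)).
  assert (Hsq : 0 < sq) by (apply sqrt_lt_R0; apply Qpos).
  clearbody sq.
  assert (Ha : a <> 0) by (intro; subst; lra).
  assert (Hb : b = / a) by (field_simplify_eq; [lra|auto]).
  subst b.
  unfold det3, dotE, cross, scal3. cbn [mk3 c0 Defs.c1 c2 fst snd].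
  field. split; auto; lra.
Qed.

Lemma constr_gen (g1 g2 G1 G2 : R -> R) t : ex_derive g1 (G1 t) -> ex_derive g2 (G2 t) ->
  ex_derive G1 t -> ex_derive G2 t -> locally t (fun s => g1 (G1 s) * g2 (G2 s) = 1) ->
  Derive g1 (G1 t) * Derive G1 t * g2 (G2 t) + g1 (G1 t) * (Derive g2 (G2 t) * Derive G2 t) = 0.
Proof.
  intros H1 H2 H3 H4 Hl.
  assert (E1 : Derive (fun s => g1 (G1 s) * g2 (G2 s)) t = 0).
  { transitivity (Derive (fun _ : R => 1) t); [apply Derive_ext_loc; exact Hl | apply Derive_const]. }
  rewrite <- E1. symmetry. apply is_derive_unique. auto_derive.
  - repeat split; auto.
  - change (fun x : R => g1 x) with g1. change (fun x : R => g2 x) with g2.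
    change (fun x : R => G1 x) with G1. change (fun x : R => G2 x) with G2. ring.
Qed.

Lemma cont_sign (f : R -> R) x : continuous f x -> f x <> 0 ->
  exists r, 0 < r /\ forall y, Rabs (y - x) < r -> 0 < f y * f x.
Proof.
  intros Hc Hx.
  assert (HL : locally (f x) (fun z => 0 < z * f x)).
  { exists (mkposreal (Rabs (f x)) (Rabs_pos_lt _ Hx)). intros z Hz.
    change (Rabs (z - f x) < Rabs (f x)) in Hz.
    destruct (Rcase_abs (f x)) as [Hn|Hp].
    - rewrite (Rabs_left _ Hn) in Hz. apply Rabs_def2 in Hz. destruct Hz. nra.
    - rewrite (Rabs_right _ Hp) in Hz. apply Rabs_def2 in Hz. destruct Hz.
      assert (0 < f x) by lra. nra. }
  destruct (Hc _ HL) as [e He]. exists e. split; [apply cond_pos|].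
  intros y Hy. apply (He y). exact Hy.
Qed.

Lemma dist_fst (q p : pt2) : Rabs (fst q - fst p) <= dist2 q p.
Proof.
  unfold dist2. rewrite <- sqrt_Rsqr_abs. apply sqrt_le_1_alt.
  unfold Rsqr. assert (0 <= (snd q - snd p)^2) by apply pow2_ge_0. lra.
Qed.
Lemma dist_snd (q p : pt2) : Rabs (snd q - snd p) <= dist2 q p.
Proof.
  unfold dist2. rewrite <- sqrt_Rsqr_abs. apply sqrt_le_1_alt.
  unfold Rsqr. assert (0 <= (fst q - fst p)^2) by apply pow2_ge_0. lra.
Qed.

Lemma loc_int' ta tb t : ta < t < tb -> locally t (fun s => ta < s < tb).
Proof.
  intros Ht. apply (open_and (fun s => ta < s) (fun s => s < tb)); [apply open_gt|apply open_lt|exact Ht].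
Qed.

Lemma K_near (U : pt2 -> Prop) (Gs : pt2 -> R) (g1 g2 w1 w2 : R -> R) (p : pt2) (Sing : pt2 -> Prop) :
  (forall q, U q -> ~ Sing q -> Gs q = 4 * Derive g1 (fst q) * Derive g2 (snd q) /
     (w1 (fst q) * w2 (snd q) * (1 - g1 (fst q) * g2 (snd q))^4) /\
     w1 (fst q) <> 0 /\ w2 (snd q) <> 0 /\ 1 - g1 (fst q) * g2 (snd q) <> 0) ->
  continuous (Derive g1) (fst p) -> continuous (Derive g2) (snd p) ->
  continuous w1 (fst p) -> continuous w2 (snd p) ->
  w1 (fst p) * w2 (snd p) * Derive g1 (fst p) * Derive g2 (snd p) <> 0 ->
  exists r, 0 < r /\ forall q, U q -> dist2 q p < r -> ~ Sing q ->
    0 < Gs q * (w1 (fst p) * w2 (snd p) * Derive g1 (fst p) * Derive g2 (snd p)).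
Proof.
  intros HG C1 C2 C3 C4 Hm.
  assert (N1 : Derive g1 (fst p) <> 0) by (intro E; apply Hm; rewrite E; ring).
  assert (N2 : Derive g2 (snd p) <> 0) by (intro E; apply Hm; rewrite E; ring).
  assert (N3 : w1 (fst p) <> 0) by (intro E; apply Hm; rewrite E; ring).
  assert (N4 : w2 (snd p) <> 0) by (intro E; apply Hm; rewrite E; ring).
  destruct (cont_sign _ _ C1 N1) as [r1 [Hr1 S1]].
  destruct (cont_sign _ _ C2 N2) as [r2 [Hr2 S2]].
  destruct (cont_sign _ _ C3 N3) as [r3 [Hr3 S3]].
  destruct (cont_sign _ _ C4 N4) as [r4 [Hr4 S4]].
  exists (Rmin (Rmin r1 r2) (Rmin r3 r4)). split.
  { apply Rmin_glb_lt; apply Rmin_glb_lt; auto. }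
  intros q Hq Hd Hs. destruct (HG q Hq Hs) as [E [W1 [W2 Z]]].
  assert (D1 : Rabs (fst q - fst p) < Rmin (Rmin r1 r2) (Rmin r3 r4)) by (eapply Rle_lt_trans; [apply dist_fst|exact Hd]).
  assert (D2 : Rabs (snd q - snd p) < Rmin (Rmin r1 r2) (Rmin r3 r4)) by (eapply Rle_lt_trans; [apply dist_snd|exact Hd]).
  assert (M1 : Rmin (Rmin r1 r2) (Rmin r3 r4) <= r1) by (eapply Rle_trans; apply Rmin_l).
  assert (M2 : Rmin (Rmin r1 r2) (Rmin r3 r4) <= r2) by (eapply Rle_trans; [apply Rmin_l|apply Rmin_r]).
  assert (M3 : Rmin (Rmin r1 r2) (Rmin r3 r4) <= r3) by (eapply Rle_trans; [apply Rmin_r|apply Rmin_l]).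
  assert (M4 : Rmin (Rmin r1 r2) (Rmin r3 r4) <= r4) by (eapply Rle_trans; apply Rmin_r).
  assert (T1 : Rabs (fst q - fst p) < r1) by lra. assert (T2 : Rabs (snd q - snd p) < r2) by lra.
  assert (T3 : Rabs (fst q - fst p) < r3) by lra. assert (T4 : Rabs (snd q - snd p) < r4) by lra.
  specialize (S1 _ T1). specialize (S2 _ T2). specialize (S3 _ T3). specialize (S4 _ T4).
  rewrite E.
  set (A1 := Derive g1 (fst q)) in *. set (A2 := Derive g2 (snd q)) in *.
  set (B1 := w1 (fst q)) in *. set (B2 := w2 (snd q)) in *.
  set (z := 1 - g1 (fst q) * g2 (snd q)) in *.
  set (a1 := Derive g1 (fst p)) in *. set (a2 := Derive g2 (snd p)) in *.
  set (b1 := w1 (fst p)) in *. set (b2 := w2 (snd p)) in *.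
  assert (Ez : 0 < z^4) by (replace (z^4) with ((z^2)^2) by ring; apply pow_lt; 
     replace (z^2) with (Rsqr z) by (unfold Rsqr; ring); apply Rsqr_pos_lt; auto).
  assert (Eb : 0 < (B1*B2)^2) by (replace ((B1*B2)^2) with (Rsqr (B1*B2)) by (unfold Rsqr; ring);
     apply Rsqr_pos_lt; apply Rmult_integral_contrapositive; split; auto).
  replace (4 * A1 * A2 / (B1 * B2 * z ^ 4) * (b1 * b2 * a1 * a2))
    with (4 * (A1*a1) * (A2*a2) * (B1*b1) * (B2*b2) / ((B1*B2)^2 * z^4))
    by (field; repeat split; auto; apply pow_nonzero; auto).
  apply Rdiv_lt_0_compat; [|apply Rmult_lt_0_compat; auto].
  apply Rmult_lt_0_compat; [apply Rmult_lt_0_compat; [apply Rmult_lt_0_compat; [apply Rmult_lt_0_compat|]|]|]; auto; lra.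
Qed.

Theorem theorem4p8 (U : pt2 -> Prop) (g1 g2 w1 w2 : R -> R) (u0 v0 : R) (c : pt3)
  (gam eta : R -> pt2) (a b : R) :
  real_weierstrass_data U g1 g2 w1 w2 ->
  U (u0, v0) ->
  singular_curve U (minface g1 g2 w1 w2 u0 v0 c) gam a b ->
  null_vector_field (minface g1 g2 w1 w2 u0 v0 c) gam eta a b ->
  cuspidal_edge U (minface g1 g2 w1 w2 u0 v0 c) (gam 0) ->
  exists delta, 0 < delta /\ forall t, - delta < t < delta ->
    (0 < sing_curv (minface g1 g2 w1 w2 u0 v0 c) g1 g2 gam eta t ->
       exists r, 0 < r /\ forall q, U q -> dist2 q (gam t) < r ->
         ~ singular (minface g1 g2 w1 w2 u0 v0 c) q ->
         0 < gauss (minface g1 g2 w1 w2 u0 v0 c) q) /\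
    (sing_curv (minface g1 g2 w1 w2 u0 v0 c) g1 g2 gam eta t < 0 ->
       exists r, 0 < r /\ forall q, U q -> dist2 q (gam t) < r ->
         ~ singular (minface g1 g2 w1 w2 u0 v0 c) q ->
         gauss (minface g1 g2 w1 w2 u0 v0 c) q < 0) /\
    (sing_curv (minface g1 g2 w1 w2 u0 v0 c) g1 g2 gam eta t = 0 <->
       Derive g1 (fst (gam t)) = 0 \/ Derive g2 (snd (gam t)) = 0).
Proof.
  intros HW HU0 Hsc Hnv _.
  destruct HW as [[HUo [HUc _]] [Hsg1 [Hsw1 [Hsg2 [Hsw2 [Hw1nz [Hw2nz _]]]]]]].
  assert (HI1o : open (proj1U U)) by (apply open_proj1; auto).
  assert (HI2o : open (proj2U U)) by (apply open_proj2; auto).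
  assert (HI1i : intervalP (proj1U U)) by (intros x y z; apply interval_proj1; auto).
  assert (HI2i : intervalP (proj2U U)) by (intros x y z; apply interval_proj2; auto).
  assert (Hg1 : forall x, proj1U U x -> ex_derive g1 x) by (intros; eapply smooth1; eauto).
  assert (Hw1 : forall x, proj1U U x -> ex_derive w1 x) by (intros; eapply smooth1; eauto).
  assert (Hg2 : forall x, proj2U U x -> ex_derive g2 x) by (intros; eapply smooth1; eauto).
  assert (Hw2 : forall x, proj2U U x -> ex_derive w2 x) by (intros; eapply smooth1; eauto).
  assert (Hu0 : proj1U U u0) by (exists v0; auto).
  assert (Hv0 : proj2U U v0) by (exists u0; auto).
  destruct Hsc as [[Hta Htb] [Hsm1 [Hsm2 [Hcur _]]]].
  rename a into ta, b into tb.
  assert (Hga : forall t, ta < t < tb -> ex_derive (fun s => fst (gam s)) t /\ ex_derive (Derive (fun s => fst (gam s))) t)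
    by (intros; split; [eapply smooth1|eapply smooth2d]; eauto).
  assert (Hgb : forall t, ta < t < tb -> ex_derive (fun s => snd (gam s)) t /\ ex_derive (Derive (fun s => snd (gam s))) t)
    by (intros; split; [eapply smooth1|eapply smooth2d]; eauto).
  assert (HgU : forall t, ta < t < tb -> proj1U U (fst (gam t)) /\ proj2U U (snd (gam t))).
  { intros t Ht. destruct (Hcur t Ht) as [HU _].
    split; [exists (snd (gam t)) | exists (fst (gam t))]; rewrite <- surjective_pairing; auto. }
  pose proof (fu_F g1 g2 w1 w2 u0 v0 c _ _ HI1o HI1i HI2o HI2i Hg1 Hw1 Hg2 Hw2 Hu0 Hv0) as FU.
  pose proof (fv_F g1 g2 w1 w2 u0 v0 c _ _ HI1o HI1i HI2o HI2i Hg1 Hw1 Hg2 Hw2 Hu0 Hv0) as FV.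
  pose proof (sing_F g1 g2 w1 w2 u0 v0 c _ _ HI1o HI1i HI2o HI2i Hg1 Hw1 Hg2 Hw2 Hu0 Hv0) as SF.
  pose proof (gauss_F g1 g2 w1 w2 u0 v0 c _ _ HI1o HI1i HI2o HI2i Hg1 Hw1 Hg2 Hw2 Hu0 Hv0) as GF.
  pose proof (pd2_lam0 g1 g2 w1 w2 u0 v0 c _ _ HI1o HI1i HI2o HI2i Hg1 Hw1 Hg2 Hw2 Hu0 Hv0) as PL0.
  pose proof (pd2_lam1 g1 g2 w1 w2 u0 v0 c _ _ HI1o HI1i HI2o HI2i Hg1 Hw1 Hg2 Hw2 Hu0 Hv0) as PL1.
  pose proof (gh1_F g1 g2 w1 w2 u0 v0 c _ _ HI1o HI1i HI2o HI2i Hg1 Hw1 Hg2 Hw2 Hu0 Hv0 gam ta tb Hga Hgb HgU) as GH1.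
  pose proof (gh2_F g1 g2 w1 w2 u0 v0 c _ _ HI1o HI1i HI2o HI2i Hg1 Hw1 Hg2 Hw2 Hu0 Hv0 gam ta tb Hga Hgb HgU) as GH2.
  assert (Hone : forall t, ta < t < tb -> g1 (fst (gam t)) * g2 (snd (gam t)) = 1).
  { intros t Ht. destruct (HgU t Ht) as [H1 H2]. destruct (Hcur t Ht) as [_ [_ Hs]].
    rewrite (surjective_pairing (gam t)) in Hs.
    apply (proj1 (SF _ _ H1 H2 (Hw1nz _ H1) (Hw2nz _ H2))). exact Hs. }
  exists (Rmin (-ta) tb). split; [apply Rmin_glb_lt; lra|].
  intros t Ht.
  assert (Htab : ta < t < tb).
  { assert (Rmin (-ta) tb <= -ta) by apply Rmin_l. assert (Rmin (-ta) tb <= tb) by apply Rmin_r. lra. }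
  destruct (HgU t Htab) as [H1 H2].
  pose proof (Hone t Htab) as Hab.
  assert (Hc : Derive g1 (fst (gam t)) * Derive (fun s => fst (gam s)) t * g2 (snd (gam t)) +
               g1 (fst (gam t)) * (Derive g2 (snd (gam t)) * Derive (fun s => snd (gam s)) t) = 0).
  { apply (constr_gen g1 g2 (fun s => fst (gam s)) (fun s => snd (gam s))); auto.
    - apply Hga; auto.
    - apply Hgb; auto.
    - generalize (loc_int' ta tb t Htab). apply filter_imp. intros s Hs. apply Hone; auto. }
  destruct (Hnv t Htab) as [Hne [Hadd Hdet]].
  rewrite (surjective_pairing (gam t)) in Hadd.
  rewrite (FU _ _ H1), (FV _ _ H2) in Hadd.
  unfold add3, scal3, mk3 in Hadd. cbn [c0 Defs.c1 c2 fst snd] in Hadd.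
  injection Hadd as E0 E1 E2.
  assert (He : fst (eta t) * w1 (fst (gam t)) * g1 (fst (gam t))^2 = snd (eta t) * w2 (snd (gam t))).
  { match type of E2 with ?L = 0 =>
      assert (X : fst (eta t) * w1 (fst (gam t)) * g1 (fst (gam t))^2 - snd (eta t) * w2 (snd (gam t))
        = g1 (fst (gam t)) * L + snd (eta t) * w2 (snd (gam t)) * (g1 (fst (gam t)) * g2 (snd (gam t)) - 1)) by field end.
    rewrite E2, Hab in X. lra. }
  assert (Hdet' : Derive (fun s => fst (gam s)) t * snd (eta t) - Derive (fun s => snd (gam s)) t * fst (eta t) > 0).
  { unfold det2, dcurve in Hdet. cbn [fst snd] in Hdet. lra. }
  assert (Hx : ~ (Derive (fun s => fst (gam s)) t = 0 /\ Derive (fun s => snd (gam s)) t = 0)).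
  { intros [A B]. destruct (Hcur t Htab) as [_ [Hd _]]. apply Hd. unfold dcurve. rewrite A, B. reflexivity. }
  assert (Hab' : g1 (fst (gam t)) * g2 (snd (gam t)) = 1) by exact Hab.
  assert (P0e : pd2 0 (lam (minface g1 g2 w1 w2 u0 v0 c) g1 g2) (gam t) =
     -(Derive g1 (fst (gam t)) * g2 (snd (gam t))) * (/2 * w1 (fst (gam t)) * w2 (snd (gam t)) *
       sqrt ((1 - g1 (fst (gam t)) * g2 (snd (gam t)))^2 + 2*(g1 (fst (gam t)) + g2 (snd (gam t)))^2))).
  { rewrite (surjective_pairing (gam t)) at 1. apply PL0; auto. }
  assert (P1e : pd2 1 (lam (minface g1 g2 w1 w2 u0 v0 c) g1 g2) (gam t) =
     -(g1 (fst (gam t)) * Derive g2 (snd (gam t))) * (/2 * w1 (fst (gam t)) * w2 (snd (gam t)) *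
       sqrt ((1 - g1 (fst (gam t)) * g2 (snd (gam t)))^2 + 2*(g1 (fst (gam t)) + g2 (snd (gam t)))^2))).
  { rewrite (surjective_pairing (gam t)) at 1. apply PL1; auto. }
  unfold sing_curv. cbv beta iota zeta.
  rewrite (GH1 t Htab), (GH2 t Htab), P0e, P1e.
  unfold euc_normal. cbv zeta.
  rewrite (det_curve _ _ _ _ _ _ _ _ _ _ _ _ Hab').
  assert (KN : forall q, U q -> ~ singular (minface g1 g2 w1 w2 u0 v0 c) q ->
     gauss (minface g1 g2 w1 w2 u0 v0 c) q = 4 * Derive g1 (fst q) * Derive g2 (snd q) /
     (w1 (fst q) * w2 (snd q) * (1 - g1 (fst q) * g2 (snd q))^4) /\
     w1 (fst q) <> 0 /\ w2 (snd q) <> 0 /\ 1 - g1 (fst q) * g2 (snd q) <> 0).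
  { intros [u v] Hq Hs. assert (Q1 : proj1U U u) by (exists v; auto). assert (Q2 : proj2U U v) by (exists u; auto).
    assert (N : g1 u * g2 v <> 1) by (intro E; apply Hs; apply (proj2 (SF _ _ Q1 Q2 (Hw1nz _ Q1) (Hw2nz _ Q2))); exact E).
    cbn [fst snd]. split; [apply GF; auto|]. split; [auto|split; [auto|lra]]. }
  assert (CK : forall m0, m0 = w1 (fst (gam t)) * w2 (snd (gam t)) * Derive g1 (fst (gam t)) * Derive g2 (snd (gam t)) ->
     m0 <> 0 -> exists r, 0 < r /\ forall q, U q -> dist2 q (gam t) < r -> ~ singular (minface g1 g2 w1 w2 u0 v0 c) q ->
    0 < gauss (minface g1 g2 w1 w2 u0 v0 c) q * m0).
  { intros m0 Em Hm. subst m0. apply K_near; auto.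
    - apply (@ex_derive_continuous R_AbsRing R_NormedModule). eapply smooth2d; eauto.
    - apply (@ex_derive_continuous R_AbsRing R_NormedModule). eapply smooth2d; eauto.
    - apply (@ex_derive_continuous R_AbsRing R_NormedModule). auto.
    - apply (@ex_derive_continuous R_AbsRing R_NormedModule). auto. }
  clear KN.
  set (P1 := Derive g1 (fst (gam t))) in *. set (P2 := Derive g2 (snd (gam t))) in *.
  set (A := g1 (fst (gam t))) in *. set (B := g2 (snd (gam t))) in *.
  set (W1 := w1 (fst (gam t))) in *. set (W2 := w2 (snd (gam t))) in *.
  set (X1 := Derive (fun s => fst (gam s)) t) in *. set (X2 := Derive (fun s => snd (gam s)) t) in *.
  set (e1 := fst (eta t)) in *. set (e2 := snd (eta t)) in *.
  set (sq := sqrt ((1 - A * B) ^ 2 + 2 * (A + B) ^ 2)) in *.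
  assert (Hsq : 0 < sq) by (apply sqrt_lt_R0; apply Qpos).
  assert (HW1 : W1 <> 0) by (apply Hw1nz; auto). assert (HW2 : W2 <> 0) by (apply Hw2nz; auto).
  assert (HA : A <> 0) by (intro E; rewrite E in Hab; lra).
  set (z3 := / 2 * (2 * A * W1) * X1 + / 2 * (-2 * B * W2) * X2).
  assert (Hz3 : z3 * e2 - A*W1*(X1*e2 - X2*e1) = -B*X2*(e2*W2 - e1*W1*A^2) + A*W1*X2*e1*(1 - A*B))
    by (unfold z3; field).
  rewrite He, Hab in Hz3.
  assert (Hz3' : z3 <> 0).
  { intro Z. rewrite Z in Hz3. assert (A*W1*(X1*e2 - X2*e1) = 0) by lra.
    apply Rmult_integral in H. destruct H as [H|H]; [apply Rmult_integral in H; destruct H; contradiction|lra]. }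
  match goal with |- context [normE ?V] => set (nr := normE V) end.
  assert (Hnr : 0 < nr).
  { unfold nr, normE. apply sqrt_lt_R0. unfold dotE. cbn [mk3 c0 Defs.c1 c2 fst snd].
    fold z3. assert (0 < z3 * z3) by (apply Rsqr_pos_lt; auto).
    match goal with |- 0 < ?x * ?x + ?y * ?y + _ => assert (0 <= x*x) by apply Rle_0_sqr; assert (0 <= y*y) by apply Rle_0_sqr end.
    lra. }
  assert (Hc' : P1*X1*B + A*P2*X2 = 0) by (rewrite <- Hc; ring).
  match goal with |- (0 < ?K -> _) /\ _ => set (k := K) end.
  assert (Hk : k = sgn (e1*(/2*W1*W2*(-(P1*B))*sq) + e2*(/2*W1*W2*(-(A*P2))*sq)) *
    ((/sq) * (-(W1*X1 - W2*X2/A^2)*(1+A^2)^2*(P1*X1^2*W1+P2*X2^2*W2)/A)) / nr^3).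
  { unfold k. replace (e1 * (- (P1 * B) * (/ 2 * W1 * W2 * sq)) + e2 * (- (A * P2) * (/ 2 * W1 * W2 * sq)))
      with (e1*(/2*W1*W2*(-(P1*B))*sq) + e2*(/2*W1*W2*(-(A*P2))*sq)) by ring. reflexivity. }
  destruct (final_alg A B W1 W2 P1 P2 X1 X2 e1 e2 sq sq nr Hab HW1 HW2 Hsq Hsq Hnr Hx Hc' He Hdet' k Hk) as [F1 [F2 F3]].
  split; [|split; [|exact F3]].
  - intro Hp. apply F1 in Hp. destruct (CK _ eq_refl ltac:(lra)) as [r [Hr Hq]].
    exists r. split; auto. intros q Q1 Q2 Q3. specialize (Hq q Q1 Q2 Q3).
    apply (prod_pos_l (W1 * W2 * P1 * P2)); auto. rewrite Rmult_comm. exact Hq.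
  - intro Hn. apply F2 in Hn. destruct (CK _ eq_refl ltac:(lra)) as [r [Hr Hq]].
    exists r. split; auto. intros q Q1 Q2 Q3. specialize (Hq q Q1 Q2 Q3).
    apply (prod_neg_l (W1 * W2 * P1 * P2)); auto. rewrite Rmult_comm. exact Hq.
Qed.
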